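(* Let $F$ be a finite field of characteristic $3$. Let $k\ge 0$ be an integer, $m=3k+1$, and $t$ an integer with $t^3\equiv 1\pmod m$ and $\gcd(m,t-1)=1$. Let $G=T_{3m}=\langle x,y\mid x^m=y^3=1,\ y^{-1}xy=x^t\rangle$ (of order $3m$) and $FG$ its group algebra. Let $s\in FG$ be the sum of all elements of $G$ whose order is a power of $3$ (including the identity), and $\mathrm{Anh}(s)=\{\alpha\in FG\mid \alpha s=s\alpha=0\}$. Then $\dim_F J(FG)=\dim_F \mathrm{Anh}(s)=2$.
   Context: $J(FG)$ denotes the Jacobson radical of $FG$. *)

(* Defs.v *)
From HB Require Import structures.
From mathcomp Require Import all_boot all_order all_algebra all_fingroup all_solvable.
Set Implicit Arguments. Unset Strict Implicit. Unset Printing Implicit Defensive.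
Import GRing.Theory.
Local Open Scope ring_scope.

(* The group algebra F[gT] of a finite group gT over a field F, realised as
   the F-vector space of functions gT -> F (vectType over F), with the
   convolution product. *)
Definition galg (F : fieldType) (gT : finGroupType) := {ffun gT -> F^o}.

Definition gmul (F : fieldType) (gT : finGroupType) (a b : galg F gT) : galg F gT :=
  [ffun g : gT => \sum_(h : gT) a h * b ((h^-1 * g)%g)].

Definition gelt (F : fieldType) (gT : finGroupType) (g : gT) : galg F gT :=
  [ffun h : gT => if h == g then 1 else 0].

Definition left_ideal (F : fieldType) (gT : finGroupType) (I : {vspace galg F gT}) :=
  forall a b : galg F gT, b \in I -> gmul a b \in I.

Definition maximal_left_ideal (F : fieldType) (gT : finGroupType)
    (I : {vspace galg F gT}) :=
  [/\ left_ideal I, I != fullv &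
      forall K : {vspace galg F gT}, left_ideal K -> (I <= K)%VS ->
        K = I \/ K = fullv].

Definition in_jacobson (F : fieldType) (gT : finGroupType) (a : galg F gT) :=
  forall I : {vspace galg F gT}, maximal_left_ideal I -> a \in I.

(* Main.v *)
Require Import Defs.
From HB Require Import structures.
From mathcomp Require Import all_boot all_order all_algebra all_fingroup all_solvable.
From mathcomp Require Import finfield.
From Stdlib Require Import Classical.
From mathcomp Require Import zify ring.
Set Implicit Arguments. Unset Strict Implicit. Unset Printing Implicit Defensive.
Import GRing.Theory.
Local Open Scope ring_scope.

Section Alg.
Variables (F : fieldType) (gT : finGroupType).
Local Notation A := (galg F gT).
Implicit Types (a b c : A) (g h z : gT).

Lemma gmulE a b g : gmul a b g = \sum_(h : gT) a h * b ((h^-1 * g)%g).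
Proof. by rewrite ffunE. Qed.

Lemma gmulA a b c : gmul (gmul a b) c = gmul a (gmul b c).
Proof.
apply/ffunP => g; rewrite !ffunE.
under eq_bigr => k _ do rewrite ffunE big_distrl.
rewrite exchange_big; apply: eq_bigr => h _ /=.
rewrite ffunE big_distrr (reindex_inj (mulgI h)); apply: eq_bigr => l _ /=.
by rewrite mulKg invMg mulgA mulrA.
Qed.

Lemma gmulDl a b c : gmul (a + b) c = gmul a c + gmul b c.
Proof.
apply/ffunP => g; rewrite !ffunE -big_split; apply: eq_bigr => h _.
by rewrite ffunE mulrDl.
Qed.

Lemma gmulDr a b c : gmul a (b + c) = gmul a b + gmul a c.
Proof.
apply/ffunP => g; rewrite !ffunE -big_split; apply: eq_bigr => h _.
by rewrite ffunE mulrDr.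
Qed.

Lemma gmulZl (k : F) a b : gmul (k *: a) b = k *: gmul a b.
Proof.
apply/ffunP => g; rewrite !ffunE [RHS]big_distrr; apply: eq_bigr => h _ /=.
by rewrite ffunE mulrA.
Qed.

Lemma gmulZr (k : F) a b : gmul a (k *: b) = k *: gmul a b.
Proof.
apply/ffunP => g; rewrite !ffunE [RHS]big_distrr; apply: eq_bigr => h _ /=.
by rewrite ffunE mulrCA.
Qed.

Lemma geltE g h : gelt F g h = (h == g)%:R.
Proof. by rewrite ffunE; case: eqP. Qed.

Lemma gmul_geltl g a z : gmul (gelt F g) a z = a ((g^-1 * z)%g).
Proof.
rewrite ffunE (bigD1 g) //= big1 ?addr0; first by rewrite ffunE eqxx mul1r.
by move=> h /negPf nh; rewrite ffunE nh mul0r.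
Qed.

Lemma gmul_geltr g a z : gmul a (gelt F g) z = a ((z * g^-1)%g).
Proof.
rewrite ffunE (bigD1 ((z * g^-1)%g)) //= big1 ?addr0.
  by rewrite ffunE invMg invgK mulgKV eqxx mulr1.
move=> h nh; rewrite ffunE; case: eqP; last by rewrite mulr0.
by move=> E; case/eqP: nh; rewrite -E invMg invgK mulKVg.
Qed.

Lemma gmul1l a : gmul (gelt F 1%g) a = a.
Proof. by apply/ffunP => z; rewrite gmul_geltl invg1 mul1g. Qed.

Lemma gmul1r a : gmul a (gelt F 1%g) = a.
Proof. by apply/ffunP => z; rewrite gmul_geltr invg1 mulg1. Qed.

Lemma gelt_mul g h : gmul (gelt F g) (gelt F h) = gelt F (g * h)%g.
Proof.
apply/ffunP => z; rewrite gmul_geltl !geltE; congr (_%:R).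
by rewrite -(inj_eq (mulgI g)) mulKVg.
Qed.

End Alg.

Section Ring.
Variables (F : fieldType) (gT : finGroupType).
Definition GA := galg F gT.
HB.instance Definition _ := GRing.Lmodule.on GA.

Lemma gelt1_neq0 : (gelt F (1%g : gT) : GA) != 0.
Proof. by apply/eqP => /ffunP /(_ 1%g); rewrite !ffunE eqxx; apply/eqP; rewrite oner_eq0. Qed.

Let mulGA : GA -> GA -> GA := @gmul F gT.
Let oneGA : GA := gelt F 1%g.
Let mA : associative mulGA. Proof. by move=> a b c; rewrite /mulGA gmulA. Qed.
Let m1l : left_id oneGA mulGA. Proof. exact: gmul1l. Qed.
Let m1r : right_id oneGA mulGA. Proof. exact: gmul1r. Qed.
Let mDl : left_distributive mulGA +%R. Proof. exact: gmulDl. Qed.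
Let mDr : right_distributive mulGA +%R. Proof. exact: gmulDr. Qed.
HB.instance Definition _ := GRing.Zmodule_isNzRing.Build GA
  mA m1l m1r mDl mDr gelt1_neq0.
HB.instance Definition _ := GRing.Lmodule_isLalgebra.Build F GA
  (fun k u v => esym (@gmulZl F gT k u v)).
HB.instance Definition _ := GRing.Lalgebra_isAlgebra.Build F GA
  (fun k u v => esym (@gmulZr F gT k u v)).

Lemma GA_mulE (a b : GA) : a * b = gmul a b. Proof. by []. Qed.
Lemma GA_oneE : (1 : GA) = gelt F 1%g. Proof. by []. Qed.
End Ring.

Section Jac.
Variables (F : fieldType) (gT : finGroupType).
Local Notation A := (galg F gT).
Local Notation R := (GA F gT).

Definition rmul (u z : A) : A := gmul z u.
Fact rmul_linear u : linear (rmul u).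
Proof. by move=> k a b; rewrite /rmul gmulDl gmulZl. Qed.
HB.instance Definition _ u := GRing.isLinear.Build F A A _ (rmul u) (rmul_linear u).

Definition Lid u : {vspace A} := limg (linfun (rmul u)).

Lemma LidP u b : reflect (exists z, b = gmul z u) (b \in Lid u).
Proof.
apply: (iffP memv_imgP) => [[z _ ->]|[z ->]]; first by exists z; rewrite lfunE.
by exists z; rewrite ?memvf ?lfunE.
Qed.

Lemma Lid_left u : left_ideal (Lid u).
Proof.
move=> a b /LidP[z ->]; apply/LidP; exists (gmul a z); by rewrite gmulA.
Qed.

Lemma Lid_mem u : u \in Lid u.
Proof. by apply/LidP; exists (gelt F 1%g); rewrite gmul1l. Qed.

Lemma max_ext (L : {vspace A}) : left_ideal L -> L != fullv ->
  exists2 I, maximal_left_ideal I & (L <= I)%VS.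
Proof.
move: {2}(\dim (fullv : {vspace A}) - \dim L)%N (leqnn (\dim (fullv : {vspace A}) - \dim L)) => n.
elim: n L => [|n IH] L hn hL hLf.
all: case: (classic (exists K : {vspace A}, [/\ left_ideal K, (L <= K)%VS, K != L & K != fullv])).
- move=> [K [hK LK KL Kf]].
  have : (\dim L < \dim K)%N.
    by rewrite ltn_neqAle (dimv_leqif_eq LK) eq_sym KL dimvS.
  have : (\dim K <= \dim (fullv : {vspace A}))%N by rewrite dimvS // subvf.
  move: hn; rewrite leqn0 subn_eq0 => h1 h2 h3.
  by have := leq_trans h3 (leq_trans h2 h1); rewrite ltnn.
- move=> nK; exists L => //; split=> // K hK LK.
  case: (eqVneq K L) => [->|KL]; first by left.
  case: (eqVneq K fullv) => [->|Kf]; first by right.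
  by case: nK; exists K.
- move=> [K [hK LK KL Kf]].
  have lt : (\dim L < \dim K)%N.
    by rewrite ltn_neqAle (dimv_leqif_eq LK) eq_sym KL dimvS.
  have hd : (\dim (fullv : {vspace A}) - \dim K <= n)%N.
    have : (\dim K <= \dim (fullv : {vspace A}))%N by rewrite dimvS // subvf.
    move=> h; lia.
  have [I hI KI] := IH K hd hK Kf.
  by exists I => //; apply: subv_trans KI.
- move=> nK; exists L => //; split=> // K hK LK.
  case: (eqVneq K L) => [->|KL]; first by left.
  case: (eqVneq K fullv) => [->|Kf]; first by right.
  by case: nK; exists K.
Qed.

Definition Qp (a : R) := forall r : R, exists s : R, s * (1 - r * a) = 1.

Lemma fullv_one (I : {vspace A}) : left_ideal I -> (1 : R) \in I -> I = fullv.
Proof.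
move=> hI oI; apply/eqP; rewrite eqEsubv subvf /=; apply/subvP => b _.
by rewrite -[b](gmul1r) ; apply: hI.
Qed.

Lemma jac_Qp (a : R) : in_jacobson a -> Qp a.
Proof.
move=> ja r; set u := 1 - r * a.
case: (boolP ((1 : R) \in Lid u)) => [/LidP[s ->]|n1]; first by exists s.
have Lf : Lid u != fullv by apply: contra n1 => /eqP ->; rewrite memvf.
have [I mI LI] := max_ext (@Lid_left u) Lf.
case: (mI) => hI If _.
have raI : r * a \in I := hI r a (ja I mI).
have uI : u \in I := subvP LI _ (@Lid_mem u).
have oneI : (1 : R) \in I by rewrite -(subrK (r * a) 1) memvD.
by move: If; rewrite (fullv_one hI oneI) eqxx.
Qed.

Lemma Qp_jac (a : R) : Qp a -> in_jacobson a.
Proof.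
move=> qa I [hI If maxI]; apply/negPn/negP => aI.
pose K := (I + Lid a)%VS.
have hK : left_ideal K.
  move=> c b /memv_addP[i iI [w wL ->]]; rewrite gmulDr memv_add //; first exact: hI.
  exact: Lid_left.
have [KI|Kf] := maxI K hK (addvSl I (Lid a)).
  by case/negP: aI; rewrite -KI (subvP (addvSr _ _)) // Lid_mem.
have : (1 : R) \in K by rewrite Kf memvf.
case/memv_addP=> i iI [w /LidP[z ->] E].
have [s hs] := qa z.
have : (1 : R) \in I.
  have ei : (1 - (z : R) * a : R) = i by apply/eqP; rewrite subr_eq; apply/eqP; exact E.
  by rewrite -hs ei; apply: hI.
by move/(fullv_one hI); move/eqP: If.
Qed.

Lemma Qp_mulr (a w : R) : Qp a -> Qp (a * w).
Proof.
move=> qa r; have [s hs] := qa (w * r); exists (1 + r * a * s * w).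
have e : s * w - s * (w * r * a) * w = w.
  by rewrite -mulrBl -{1}[s]mulr1 -mulrBr hs mul1r.
have eX : r * a * s * w - r * a * s * w * (r * (a * w)) = r * (a * w).
  by rewrite -{4}e !mulrBr !mulrA.
by rewrite mulrDl mul1r mulrBr mulr1 eX subrK.
Qed.

Lemma jacD (a b : R) : in_jacobson a -> in_jacobson b -> in_jacobson (a + b).
Proof. by move=> ja jb I mI; apply: memvD; [apply: ja | apply: jb]. Qed.
Lemma jacN (a : R) : in_jacobson a -> in_jacobson (- a).
Proof. by move=> ja I mI; rewrite memvN; apply: ja. Qed.
Lemma jacZ (k : F) (a : R) : in_jacobson a -> in_jacobson (k *: a).
Proof. move=> ja I mI; exact (memvZ k (ja I mI)). Qed.
Lemma jac_mull (c a : R) : in_jacobson a -> in_jacobson (c * a).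
Proof. by move=> ja I mI; case: (mI) => hI _ _; apply: hI; apply: ja. Qed.
Lemma jac_mulr (a w : R) : in_jacobson a -> in_jacobson (a * w).
Proof. by move=> ja; apply: Qp_jac; apply: Qp_mulr; apply: jac_Qp. Qed.
Lemma jac0 : in_jacobson (0 : R).
Proof. by move=> I _; rewrite mem0v. Qed.
Lemma jac_sum (I : Type) (r : seq I) (P : pred I) (f : I -> R) :
  (forall i, P i -> in_jacobson (f i)) -> in_jacobson (\sum_(i <- r | P i) f i).
Proof. by move=> h; apply: big_ind => //; [exact: jac0 | exact: jacD]. Qed.

Lemma Qp_periodic (d : R) E : Qp d -> (1 < E)%N -> d ^+ E = d -> d = 0.
Proof.
move=> qd E1 dE; have [s hs] := qd (d ^+ (E - 2)).
have : s * (1 - d ^+ (E - 2) * d) * d = d by rewrite hs mul1r.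
have E2 : (E - 2).+2 = E by case: E E1 {dE hs} => [|[|E]] //= _; rewrite subn2.
rewrite -mulrA mulrBl mul1r -exprSr -exprSr E2.
by rewrite dE subrr mulr0 => <-.
Qed.

Definition eps (a : A) : F := \sum_g a g.

Lemma eps_mul (a b : A) : eps (gmul a b) = eps a * eps b.
Proof.
rewrite /eps big_distrl /=.
under eq_bigr => z _ do rewrite gmulE.
rewrite exchange_big; apply: eq_bigr => h _ /=.
by rewrite -big_distrr /= (reindex_inj (mulgI h)) /=; under eq_bigr => z _ do rewrite mulKg.
Qed.

Lemma epsD (a b : A) : eps (a + b) = eps a + eps b.
Proof. by rewrite /eps -big_split; apply: eq_bigr => g _; rewrite ffunE. Qed.
Lemma epsN (a : A) : eps (- a) = - eps a.
Proof. by rewrite /eps -sumrN; apply: eq_bigr => g _; rewrite ffunE. Qed.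
Lemma epsZ (k : F) (a : A) : eps (k *: a) = k * eps a.
Proof. by rewrite /eps big_distrr; apply: eq_bigr => g _; rewrite ffunE. Qed.
Lemma eps_gelt g : eps (gelt F g) = 1.
Proof.
rewrite /eps (bigD1 g) //= big1 ?addr0 ?geltE ?eqxx //.
by move=> h /negPf nh; rewrite geltE nh.
Qed.

Lemma Qp_eps (a : R) : Qp a -> eps a = 0.
Proof.
move=> qa; apply/eqP; apply/negPn/negP => ne.
have [s hs] := qa ((eps a)^-1 *: 1).
have := congr1 eps hs.
rewrite eps_mul epsD epsN eps_mul epsZ eps_gelt mulr1 mulVf // subrr mulr0.
by move/eqP; rewrite eq_sym oner_eq0.
Qed.

End Jac.
Section Main.
Variables (F : finFieldType) (gT : finGroupType) (k : nat) (t : int) (x y : gT).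
Let m := (3 * k + 1)%N.
Hypothesis pF : 3%N \in [pchar F].
Hypothesis tgcd : gcdz m%:Z (t - 1) = 1%N.
Hypothesis gen : <<[set x; y]>>%g = [set: gT].
Hypotheses (xm : (x ^+ m)%g = 1%g) (y3 : (y ^+ 3)%g = 1%g).
Hypothesis xy : (x ^ y)%g = (x ^+ `|(t %% m%:Z)%Z|%N)%g.
Hypothesis cardG : #|gT| = (3 * m)%N.
Let m1 : m = 1 %[mod 3]. Proof. by rewrite /m mulnC modnMDl. Qed.
Let m_gt0 : (0 < m)%N. Proof. by rewrite /m addn1. Qed.

Section Grp.
Local Open Scope group_scope.
Let N := <[x]>.

Lemma normN g : g \in 'N(N).
Proof.
have yN : y \in 'N(N).
  apply/normP/eqP; rewrite eqEcard cardJg leqnn andbT -cycleJ xy.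
  by rewrite cycle_subG groupX // cycle_id.
have : [set: gT] \subset 'N(N).
  rewrite -gen gen_subG; apply/subsetP => z; rewrite in_set2 => /orP[]/eqP->//.
  by apply: (subsetP (normG _)); apply: cycle_id.
by move/subsetP; apply; rewrite inE.
Qed.

Lemma mulNY : N * <[y]> = [set: gT].
Proof.
rewrite -norm_joinEr; last by apply/subsetP => z _; apply: normN.
apply/eqP; rewrite eqEsubset subsetT /= -gen gen_subG.
apply/subsetP => z; rewrite in_set2 => /orP[]/eqP->.
  by apply: (subsetP (joing_subl _ _)); apply: cycle_id.
by apply: (subsetP (joing_subr _ _)); apply: cycle_id.
Qed.

Lemma cards_NY : [/\ #|N| = m, #[y] = 3%N & N :&: <[y]> = 1].
Proof.
have hN : (#|N| <= m)%N by apply: dvdn_leq => //; rewrite order_dvdn xm.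
have hY : (#[y] <= 3)%N by apply: dvdn_leq => //; rewrite order_dvdn y3.
have hI : (0 < #|N :&: <[y]>|)%N by rewrite cardG_gt0.
have hI1 : (1 <= #|N :&: <[y]>|)%N by [].
have E : (#|N| * #[y] = 3 * m * #|N :&: <[y]>|)%N.
  by have := mul_cardG N <[y]>; rewrite mulNY cardsT cardG.
have e1 : #|N| = m by nia.
have e2 : #[y] = 3%N by nia.
have e3 : #|N :&: <[y]>| = 1%N by nia.
by split=> //; apply: card1_trivg.
Qed.

Lemma decomp z : exists2 n, n \in N & exists2 j, (j < 3)%N & z = n * y ^+ j.
Proof.
have : z \in N * <[y]> by rewrite mulNY inE.
case/mulsgP => n p nN /cycleP[i ->] ->.
exists n => //; exists (i %% 3)%N; first by rewrite ltn_mod.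
by rewrite expg_mod.
Qed.

Lemma yN i : (i < 3)%N -> (y ^+ i \in N) = (i == 0%N).
Proof.
move=> lti; apply/idP/eqP => [yiN|->]; last exact: group1.
have : y ^+ i \in N :&: <[y]> by rewrite inE yiN mem_cycle.
case: cards_NY => _ oy ->; rewrite inE => /eqP.
move/eqP; rewrite -(expg0 y) eq_expg_mod_order oy.
by rewrite !modn_small //; move/eqP.
Qed.

Lemma yNij i j : (i < 3)%N -> (j < 3)%N -> (y ^+ j * (y ^+ i)^-1 \in N) = (i == j).
Proof.
move=> lti ltj.
have -> : (y ^+ i)^-1 = y ^+ (3 - i).
  by apply/eqP; rewrite eq_invg_mul -expgD subnKC ?y3 // ltnW.
rewrite -expgD -(expg_mod _ y3) yN ?ltn_mod //.
by case: i lti => [|[|[|]]] //; case: j ltj => [|[|[|]]].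
Qed.

Lemma ox : #[x] = m. Proof. by case: cards_NY. Qed.

Lemma cent_y w : w \in N -> commute y w -> w = 1.
Proof.
case/cycleP=> i -> cyw.
set t' := `|(t %% m%:Z)%Z|%N.
have : x ^+ (t' * i) = x ^+ i.
  by rewrite expgM -xy -conjXg conjgE -cyw mulKg.
move/eqP; rewrite eq_expg_mod_order ox => /eqP H.
have H' : (m%:Z %| (t' * i)%:Z - i%:Z)%Z.
  by rewrite -eqz_mod_dvd !modz_nat H.
have et : (t'%:Z = t %% m%:Z)%Z by rewrite gez0_abs // modz_ge0 // -lt0n.
have H2 : (m%:Z %| ((t - 1) * i%:Z)%R)%Z.
  have -> : ((t - 1) * i%:Z = ((t' * i)%N%:Z - i%:Z) + (t %/ m%:Z)%Z * i%:Z * m%:Z)%R.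
    rewrite PoszM et {1}(divz_eq t m%:Z); ring.
  by rewrite rpredD // dvdz_mull.
move: H2; rewrite Gauss_dvdzr; last by rewrite /coprimez tgcd.
by rewrite dvdzE !absz_nat -ox order_dvdn => /eqP.
Qed.

Lemma abelN a b : a \in N -> b \in N -> commute a b.
Proof. by move=> aN bN; apply: (centsP (cycle_abelian x)). Qed.

Lemma cent_triv z w : z \notin N -> w \in N -> commute z w -> w = 1.
Proof.
have [n nN [j ltj ->]] := decomp z => zN wN czw.
have cjw : commute (y ^+ j) w.
  by apply: (mulgI n); rewrite mulgA czw mulgA (abelN wN nN) -mulgA.
apply: cent_y => //.
clear czw; case: j ltj cjw zN => [|[|[|]]] // _ c2 zN.
- by rewrite expg0 mulg1 nN in zN.
have := commute_sym (commuteX 2 (commute_sym c2)).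
by rewrite -expgM (_ : 2 * 2 = 3 + 1)%N // expgD y3 mul1g expg1.
Qed.
Lemma powNq n q kk : n \in N -> exists2 n', n' \in N & (n * q) ^+ kk = n' * q ^+ kk.
Proof.
move=> nN; elim: kk => [|kk [n' n'N IH]]; first by exists 1; rewrite ?group1 // !expg0 mulg1.
exists (n' * n ^ (q ^+ kk)^-1); first by rewrite groupM // memJ_norm // normN.
by rewrite expgSr IH !conjgE invgK expgSr !mulgA mulgKV.
Qed.

Lemma notN_cube z : z \notin N -> z ^+ 3 = 1.
Proof.
move=> zN; apply: (cent_triv zN); last exact: commuteX.
have [n nN [j ltj Ez]] := decomp z.
rewrite Ez; have [n' n'N ->] := powNq (y ^+ j) 3 nN.
by rewrite -expgM mulnC expgM y3 expg1n mulg1.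
Qed.

Lemma p3elt z : 3.-elt z = (z == 1) || (z \notin N).
Proof.
case: (boolP (z \in N)) => zN /=; last first.
  rewrite orbT; apply: (@pnat_dvd _ 3); last exact: pnat_id.
  by rewrite order_dvdn notN_cube.
rewrite orbF; apply/idP/eqP => [pz|->]; last exact: p_elt1.
have : (3%N)^'.-nat #[z].
  apply: (@pnat_dvd _ m).
    by have [e1 _ _] := cards_NY; rewrite -e1; apply: order_dvdG.
  by rewrite p'natE // /dvdn m1.
by move/(pnat_1 pz)/eqP; rewrite order_eq1 => /eqP.
Qed.

Lemma conj_sum (R : nmodType) (f : gT -> R) z : z \notin N ->
  \sum_(n in N) f (n^-1 * z * n)%g = \sum_(h in N) f (h^-1 * z)%g.
Proof.
move=> zN.
pose psi n := z * n^-1 * z^-1 * n.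
have psiN n : n \in N -> psi n \in N.
  move=> nN; rewrite groupM // (_ : z * n^-1 * z^-1 = (n^-1) ^ z^-1).
    by rewrite memJ_norm ?groupV ?normN.
  by rewrite conjgE invgK mulgA.
have inj : {in N &, injective psi}.
  move=> a b aN bN E.
  have c : commute z^-1 (b * a^-1).
    move: E; rewrite /psi -!mulgA => /mulgI E.
    rewrite /commute.
    have -> : z^-1 * (b * a^-1) = b * (b^-1 * (z^-1 * b)) * a^-1 by rewrite mulKVg !mulgA.
    by rewrite -E !mulgA mulgK.
  have zN' : z^-1 \notin N by rewrite groupV.
  have := cent_triv zN' (groupM bN (groupVr aN)) c.
  by move/eqP; rewrite -eq_mulgV1 => /eqP.
have imN : psi @: N = N.
  apply/eqP; rewrite eqEcard card_in_imset // leqnn andbT.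
  by apply/subsetP => h /imsetP[n nN ->]; apply: psiN.
rewrite -{2}imN big_imset //; apply: eq_bigr => n _.
by congr f; rewrite /psi !invMg !invgK !mulgA mulgKV.
Qed.
End Grp.

Local Notation R := (GA F gT).
Let N := <[x]>%g.
Local Notation gl g := (gelt F g : R).

Lemma mF : (m%:R : F) = 1.
Proof. by rewrite /m natrD natrM (pcharf0 pF) mul0r add0r. Qed.

Lemma cardN : #|N| = m. Proof. by case: cards_NY. Qed.

Lemma geltlE g (a : R) z : (gl g * a) z = a (g^-1 * z)%g.
Proof. exact: gmul_geltl. Qed.
Lemma geltrE g (a : R) z : (a * gl g) z = a (z * g^-1)%g.
Proof. exact: gmul_geltr. Qed.
Lemma gmulRE (a b : R) z : (a * b) z = \sum_h a h * b (h^-1 * z)%g.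
Proof. exact: gmulE. Qed.
Lemma gelt_mulR g h : gl g * gl h = gl (g * h)%g.
Proof. exact: gelt_mul. Qed.
Lemma gelt_expn g i : gl g ^+ i = gl (g ^+ i)%g.
Proof.
elim: i => [|i IH]; first by rewrite expr0 expg0.
by rewrite exprS IH gelt_mulR expgS.
Qed.

Definition e : R := [ffun z => ((z \in N)%:R : F^o)].
Lemma eE z : e z = (z \in N)%:R. Proof. by rewrite ffunE. Qed.

Lemma e_mul_l (a : R) z : (e * a) z = \sum_(h in N) a (h^-1 * z)%g.
Proof.
rewrite gmulRE [RHS]big_mkcond; apply: eq_bigr => h _.
by rewrite eE; case: (h \in N); rewrite ?mul1r ?mul0r.
Qed.

Lemma e_gelt n : n \in N -> e * gl n = e.
Proof. by move=> nN; apply/ffunP => z; rewrite geltrE !eE groupMr ?groupV. Qed.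
Lemma gelt_e n : n \in N -> gl n * e = e.
Proof. by move=> nN; apply/ffunP => z; rewrite geltlE !eE groupMl ?groupV. Qed.
Lemma gelt_e_comm g : gl g * e = e * gl g.
Proof.
apply/ffunP => z; rewrite geltlE geltrE !eE.
rewrite -(memJ_norm _ (normN (g^-1)%g)) conjgE invgK !mulgA mulgV mul1g.
by [].
Qed.

Lemma ffun_decomp (a : R) : a = \sum_g a g *: gl g.
Proof.
apply/ffunP => z; rewrite sum_ffunE (bigD1 z) //= big1 ?addr0.
  by rewrite !ffunE eqxx /GRing.scale /= mulr1.
by move=> h /negPf hz; rewrite !ffunE eq_sym hz /GRing.scale /= mulr0.
Qed.

Lemma e_central (a : R) : e * a = a * e.
Proof.
rewrite (ffun_decomp a) mulr_sumr mulr_suml; apply: eq_bigr => g _.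
by rewrite -scalerAr -scalerAl gelt_e_comm.
Qed.

Lemma e_idem : e * e = e.
Proof.
apply/ffunP => z; rewrite e_mul_l eE; case: (boolP (z \in N)) => zN.
  under eq_bigr => h hN do rewrite eE groupMl ?groupV // zN.
  by rewrite sumr_const cardN /= mulr1n; exact: mF.
by rewrite big1 // => h hN; rewrite eE groupMl ?groupV // (negPf zN).
Qed.

Lemma eps_e : eps e = 1.
Proof.
rewrite /eps (eq_bigr (fun z => if z \in N then (1 : F^o) else 0)); last first.
  by move=> z _; rewrite eE; case: (z \in N).
by rewrite -big_mkcond /= sumr_const cardN; exact: mF.
Qed.
Lemma eps_mulR (a b : R) : eps (a * b) = eps a * eps b. Proof. exact: eps_mul. Qed.
Lemma epsDR (a b : R) : eps (a + b) = eps a + eps b. Proof. exact: epsD. Qed.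
Lemma epsNR (a : R) : eps (- a) = - eps a. Proof. exact: epsN. Qed.
Lemma epsBR (a b : R) : eps (a - b) = eps a - eps b. Proof. by rewrite epsDR epsNR. Qed.
Lemma epsZR c (a : R) : eps (c *: a) = c * eps a. Proof. exact: epsZ. Qed.
Lemma eps_gl g : eps (gl g) = 1. Proof. exact: eps_gelt. Qed.
Lemma eps1 : eps (1 : R) = 1. Proof. exact: eps_gelt. Qed.

Lemma ffunDE (u v : R) z : (u + v) z = u z + v z. Proof. by rewrite ffunE. Qed.
Lemma ffunNE (u : R) z : (- u) z = - u z. Proof. by rewrite ffunE. Qed.
Lemma ffunBE (u v : R) z : (u - v) z = u z - v z. Proof. by rewrite ffunDE ffunNE. Qed.
Lemma ffunZE c (u : R) z : (c *: u) z = c * u z. Proof. by rewrite ffunE. Qed.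
Lemma ffun0E z : (0 : R) z = 0. Proof. by rewrite ffunE. Qed.

Local Notation Y := (gl y).
Definition v1 : R := e - e * Y.
Definition v2 : R := e - e * Y ^+ 2.
Definition J : {vspace galg F gT} := <<[:: (v1 : galg F gT); (v2 : galg F gT)]>>%VS.

Lemma eYE i z : (e * Y ^+ i) z = ((z * (y ^+ i)^-1)%g \in N)%:R.
Proof. by rewrite gelt_expn geltrE eE. Qed.
Lemma eY1E z : (e * Y) z = ((z * y^-1)%g \in N)%:R.
Proof. by rewrite geltrE eE. Qed.

Lemma eNyi n i j : n \in N -> (i < 3)%N -> (j < 3)%N ->
  ((n * y ^+ j * (y ^+ i)^-1)%g \in N) = (i == j).
Proof. by move=> nN lti ltj; rewrite -mulgA groupMl // yNij. Qed.

Lemma const_e (a : R) n z : e * a = a -> n \in N -> a (n * z)%g = a z.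
Proof.
move=> E nN; have H : gl n^-1 * a = a by rewrite -{1}E mulrA gelt_e ?groupV.
by rewrite -{2}H geltlE invgK.
Qed.

Lemma decomp3 (a : R) : e * a = a ->
  a = a 1%g *: e + a y *: (e * Y) + a (y ^+ 2)%g *: (e * Y ^+ 2).
Proof.
move=> E; apply/ffunP => z; have [n nN [j ltj ->]] := decomp z.
have c0 : ((n * y ^+ j)%g \in N) = (0 == j).
  by rewrite -(eNyi nN _ ltj) // expg0 invg1 mulg1.
have c1 : ((n * y ^+ j * y^-1)%g \in N) = (1 == j).
  by rewrite -(eNyi nN _ ltj) // expg1.
have c2 := eNyi nN (isT : (2 < 3)%N) ltj.
rewrite !ffunDE !ffunZE eY1E eYE eE c0 c1 c2 (const_e _ E nN).
case: j ltj {c0 c1 c2} => [|[|[|]]] //= _.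
- by rewrite expg0 mulr1 !mulr0 !addr0.
- by rewrite expg1 mulr1 !mulr0 add0r addr0.
- by rewrite mulr1 !mulr0 !add0r.
Qed.
Lemma e_v1 : e * v1 = v1. Proof. by rewrite /v1 mulrBr mulrA e_idem. Qed.
Lemma e_v2 : e * v2 = v2. Proof. by rewrite /v2 mulrBr mulrA e_idem. Qed.
Lemma eps_v1 : eps v1 = 0.
Proof. by rewrite /v1 epsBR eps_mulR eps_e eps_gl mulr1 subrr. Qed.
Lemma eps_v2 : eps v2 = 0.
Proof. by rewrite /v2 epsBR eps_mulR eps_e gelt_expn eps_gl mulr1 subrr. Qed.

Lemma memJ (a : R) : a \in J <-> exists c1, exists c2, a = c1 *: v1 + c2 *: v2.
Proof.
rewrite /J span_cons span_seq1; split.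
  by case/memv_addP => u /vlineP[c1 ->] [w /vlineP[c2 ->] ->]; exists c1, c2.
case=> c1 [c2 ->]; apply: memv_add; apply/vlineP; by eexists.
Qed.

Lemma inS_J (a : R) : e * a = a -> eps a = 0 -> a \in J.
Proof.
move=> E ea; have D := decomp3 E.
have h : a 1%g = - a y - a (y ^+ 2)%g.
  move: ea; rewrite {1}D !epsDR !epsZR eps_e !eps_mulR eps_e !eps_gl !mulr1.
  by move=> H; rewrite -[LHS]subr0 -H; ring.
apply/memJ; exists (- a y), (- a (y ^+ 2)%g).
rewrite {1}D h /v1 /v2; apply/ffunP => z.
rewrite !ffunDE !ffunZE !ffunBE; ring.
Qed.

Lemma J_inS (a : R) : a \in J -> e * a = a /\ eps a = 0.
Proof.
case/memJ => c1 [c2 ->]; split.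
  by rewrite mulrDr -!scalerAr e_v1 e_v2.
by rewrite epsDR !epsZR eps_v1 eps_v2 !mulr0 addr0.
Qed.

Lemma y_notN : (y \notin N).
Proof. by rewrite -[y]expg1 yN. Qed.

Lemma dimJ : \dim J = 2%N.
Proof.
have fr : free [:: (v1 : galg F gT); (v2 : galg F gT)].
  rewrite free_cons seq1_free span_seq1; apply/andP; split.
    apply/vlineP => -[c E]; have := congr1 (fun f : galg F gT => f y) E.
    have h2 := eNyi (group1 N) (isT : (2 < 3)%N) (isT : (1 < 3)%N).
    rewrite mul1g expg1 /= in h2.
    rewrite /= /v1 /v2 ffunBE ffunZE ffunBE eY1E eYE eE mulgV group1 (negPf y_notN) h2 /=.
    by rewrite sub0r subr0 mulr0 => /eqP; rewrite oppr_eq0 oner_eq0.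
  apply/eqP => E; have := congr1 (fun f : galg F gT => f 1%g) E.
  have h2 := eNyi (group1 N) (isT : (2 < 3)%N) (isT : (0 < 3)%N).
  rewrite mul1g expg0 mul1g /= in h2.
  rewrite /= ffunBE eYE eE mul1g group1 h2 ffunE subr0 => /eqP.
  by rewrite oner_eq0.
by have /eqP := fr.
Qed.

Lemma pcharR : 3%N \in [pchar R].
Proof.
apply/andP; split => //; apply/eqP.
by rewrite -[3%:R]/((1 : R) *+ 3) -scaler_nat (pcharf0 pF) scale0r.
Qed.

Lemma J_cube (b : R) : b \in J -> b ^+ 3 = 0.
Proof.
case/memJ => c1 [c2 ->].
pose u : R := 1 - Y.
pose q : R := c1%:A + c2 *: (1 + Y).
have uY : (1 + Y) * u = 1 - Y ^+ 2.
  by rewrite /u mulrDl mul1r mulrBr mulr1 -expr2 addrA subrK.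
have uY' : u * (1 + Y) = 1 - Y ^+ 2.
  by rewrite /u mulrBl mul1r mulrDr mulr1 -expr2 opprD addrA addrK.
have E1 : c1 *: v1 + c2 *: v2 = (e * q) * u.
  rewrite -mulrA /q mulrDl mulr_algl -scalerAl uY mulrDr -!scalerAr.
  by rewrite /v1 /v2 /u !mulrBr !mulr1.
have qu : q * u = u * q.
  by rewrite /q [(_ + _) * u]mulrDl [u * (_ + _)]mulrDr mulr_algl mulr_algr -scalerAl -scalerAr uY uY'.
have cuq : GRing.comm (e * q) u.
  by rewrite /GRing.comm -mulrA qu mulrA e_central -mulrA.
have u3 : u ^+ 3 = 0.
  have c : GRing.comm (1 : R) (- Y) by rewrite /GRing.comm mul1r mulr1.
  have := pFrobenius_autD_comm pcharR c; rewrite !pFrobenius_autE /u => ->.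
  rewrite expr1n exprNn (_ : (-1 : R) ^+ 3 = -1); last by rewrite exprS sqrrN expr1n mulr1.
  by rewrite gelt_expn y3 mulN1r subrr.
by rewrite E1 exprMn_comm // u3 mulr0.
Qed.

Lemma J_jac (a : R) : a \in J -> in_jacobson a.
Proof.
move=> aJ; apply: Qp_jac => r; have [E ea] := J_inS aJ.
have raJ : r * a \in J.
  apply: inS_J; first by rewrite mulrA e_central -mulrA E.
  by rewrite eps_mulR ea mulr0.
have c3 := J_cube raJ; set u := r * a in c3 *.
exists (1 + u + u ^+ 2); rewrite mulrBr mulr1.
have -> : (1 + u + u ^+ 2) * u = u + u ^+ 2 + u ^+ 3.
  by rewrite !mulrDl mul1r -expr2 -exprSr.
by rewrite c3 addr0 -(addrA 1) addrK.
Qed.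
Lemma frob3 (f : gT -> R) (P : pred gT) :
  (forall i j, P i -> P j -> GRing.comm (f i) (f j)) ->
  (\sum_(i | P i) f i) ^+ 3 = \sum_(i | P i) f i ^+ 3.
Proof.
move=> cf; elim: (index_enum gT) => [|i r IH]; first by rewrite !big_nil expr0n.
rewrite !big_cons; case: ifP => Pi //.
have c : GRing.comm (f i) (\sum_(j <- r | P j) f j).
  by apply: commr_sum => j Pj; apply: cf.
by have := pFrobenius_autD_comm pcharR c; rewrite !pFrobenius_autE => ->; rewrite IH.
Qed.

Lemma frobK (f : gT -> R) (P : pred gT) :
  (forall i j, P i -> P j -> GRing.comm (f i) (f j)) ->
  forall K, (\sum_(i | P i) f i) ^+ (3 ^ K) = \sum_(i | P i) f i ^+ (3 ^ K).
Proof.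
move=> cf; elim=> [|K IH].
  by rewrite expn0 expr1; apply: eq_bigr => i _; rewrite expr1.
rewrite expnSr exprM IH frob3; first by apply: eq_bigr => i _; rewrite -exprM.
move=> i j Pi Pj; apply: commrX; apply: commr_sym; apply: commrX; apply: commr_sym.
exact: cf.
Qed.

Local Notation EE := (3 ^ (logn 3 #|F| * totient m))%N.

Lemma cardF : #|F| = (3 ^ logn 3 #|F|)%N.
Proof. exact: (card_pprimeChar pF). Qed.

Lemma EE_F (c : F) : c ^+ EE = c.
Proof.
rewrite expnM -cardF; elim: (totient m) => [|j IH]; first by rewrite expn0 expr1.
by rewrite expnS exprM expf_card IH.
Qed.

Lemma EE_N n : n \in N -> (n ^+ EE)%g = n.
Proof.
move=> nN.
have dvd : (#[n]%g %| m)%N by rewrite -cardN; apply: order_dvdG.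
have cop : coprime #|F| m.
  by rewrite cardF; apply: coprimeXl; rewrite prime_coprime // /dvdn m1.
have Eu := Euler_exp_totient cop.
rewrite -{2}(expg1 n); apply/eqP; rewrite eq_expg_mod_order.
by rewrite -(modn_dvdm EE dvd) expnM -cardF Eu (modn_dvdm 1 dvd).
Qed.

Lemma EE_gt1 : (1 < EE)%N.
Proof.
rewrite -[X in (X < _)%N](expn0 3) ltn_exp2l // muln_gt0 totient_gt0 m_gt0 andbT.
rewrite lt0n; apply/eqP => h; have := finNzRing_gt1 F.
by rewrite cardF h.
Qed.

Lemma jac_J (a : R) : in_jacobson a -> a \in J.
Proof.
move=> ja; have ea := Qp_eps (jac_Qp ja).
apply: inS_J => //.
pose c := a - e * a.
have jc : in_jacobson c := jacD ja (jacN (jac_mull e ja)).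
have ec : e * c = 0 by rewrite /c mulrBr mulrA e_idem subrr.
suff c0 : c = 0 by move/eqP: c0; rewrite subr_eq0 => /eqP.
apply/ffunP => g; rewrite ffun0E.
pose c' := c * gl g^-1.
have jc' : in_jacobson c' := jac_mulr _ jc.
have ec' : e * c' = 0 by rewrite /c' mulrA ec mul0r.
pose d := \sum_(n in N) gl n * c' * gl n^-1.
have jd : in_jacobson d.
  by apply: jac_sum => n _; apply: jac_mulr; apply: jac_mull.
have dE z : d z = \sum_(n in N) c' (n^-1 * z * n)%g.
  rewrite /d sum_ffunE; apply: eq_bigr => n _.
  by rewrite geltrE geltlE invgK mulgA.
have dN z : z \notin N -> d z = 0.
  by move=> zN; rewrite dE conj_sum // -e_mul_l ec' ffun0E.
have d1 : d 1%g = c g.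
  rewrite dE (eq_bigr (fun _ => c' 1%g)) => [|n _]; last by rewrite mulg1 mulVg.
  rewrite sumr_const cardN -mulr_natl mF mul1r.
  by rewrite /c' geltrE invgK mul1g.
clearbody d.
have dD : d = \sum_(n in N) d n *: gl n.
  apply/ffunP => z; rewrite sum_ffunE; case: (boolP (z \in N)) => zN.
    rewrite (bigD1 z) //= big1 => [|n /andP[_ nz]].
      by rewrite ffunZE geltE eqxx mulr1 addr0.
    by rewrite ffunZE geltE eq_sym (negPf nz) mulr0.
  rewrite dN // big1 // => n nN; rewrite ffunZE geltE.
  have -> : (z == n) = false by apply: contraNF zN => /eqP ->.
  by rewrite mulr0.
have cf : forall i j, i \in N -> j \in N -> GRing.comm (d i *: gl i) (d j *: gl j).
  move=> i j iN jN; rewrite /GRing.comm -!scalerAl -!scalerAr !scalerA.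
  by rewrite (mulrC (d i)) !gelt_mulR (abelN iN jN).
have dEE : d ^+ EE = d.
  rewrite {1}dD frobK //; rewrite {2}dD; apply: eq_bigr => n nN.
  by rewrite exprZn gelt_expn EE_F EE_N.
have d0 := Qp_periodic (jac_Qp jd) EE_gt1 dEE.
by rewrite -d1 d0 ffun0E.
Qed.
Definition Gh : R := [ffun => (1 : F^o)].

Lemma Gh_r (a : R) : a * Gh = eps a *: Gh.
Proof.
apply/ffunP => z; rewrite gmulRE ffunZE [Gh z]ffunE mulr1 /eps.
by apply: eq_bigr => h _; rewrite ffunE mulr1.
Qed.

Lemma Gh_l (a : R) : Gh * a = eps a *: Gh.
Proof.
apply/ffunP => z; rewrite gmulRE ffunZE [Gh z]ffunE mulr1 /eps.
rewrite (reindex_inj (inj_comp (mulgI z) (@invg_inj gT))) /=.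
by apply: eq_bigr => w _; rewrite ffunE mul1r invMg invgK mulgKV.
Qed.

Lemma s_eq : (\sum_(g : gT | (3.-elt g)%g) gelt F g : galg F gT) = (1 + Gh - e : R).
Proof.
apply/ffunP => z; rewrite sum_ffunE ffunBE ffunDE eE [Gh z]ffunE.
rewrite (_ : (1 : R) z = (z == 1%g)%:R); last by rewrite ffunE; case: (z == 1%g).
case: (boolP (3.-elt z)%g) => pz.
  rewrite (bigD1 z) //= big1 => [|g /andP[_ gz]]; last by rewrite geltE eq_sym (negPf gz).
  rewrite geltE eqxx addr0; move: pz; rewrite p3elt.
  case: (eqVneq z 1%g) => [->|nz] /= h; first by rewrite group1 addrK.
  by rewrite (negPf h) subr0 add0r.
rewrite big1 => [|g pg]; last first.
  by rewrite geltE; case: eqP => // E; move: pz; rewrite E pg.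
move: pz; rewrite p3elt negb_or negbK => /andP[nz zN].
by rewrite (negPf nz) zN add0r subrr.
Qed.

Lemma anh (a : R) : (a * (1 + Gh - e) = 0 /\ (1 + Gh - e) * a = 0) <-> (e * a = a /\ eps a = 0).
Proof.
have sa : (1 + Gh - e) * a = a + eps a *: Gh - e * a by rewrite mulrBl mulrDl mul1r Gh_l.
have as_ : a * (1 + Gh - e) = a + eps a *: Gh - a * e by rewrite mulrBr mulrDr mulr1 Gh_r.
rewrite sa as_; split.
  case=> _ h.
  have h2 := congr1 (fun b => e * b) h; rewrite /= mulrBr mulrDr -scalerAr Gh_r eps_e in h2.
  rewrite scale1r mulrA e_idem mulr0 addrAC subrr add0r in h2.
  have := congr1 (fun f : R => f 1%g) h2; rewrite /= ffunZE ffunE mulr1 ffun0E => epsa.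
  split => //; move: h; rewrite epsa scale0r addr0 => /eqP; rewrite subr_eq0 => /eqP.
  by move=> <-.
case=> E ea; rewrite ea scale0r addr0 -e_central E subrr; split=> //.
Qed.

Lemma main_result : let s : galg F gT := \sum_(g : gT | (3.-elt g)%g) gelt F g in
  (exists J0 : {vspace galg F gT},
      (forall a, a \in J0 <-> in_jacobson a) /\ \dim J0 = 2%N) /\
  (exists A0 : {vspace galg F gT},
      (forall a, a \in A0 <-> gmul a s = 0 /\ gmul s a = 0) /\ \dim A0 = 2%N).
Proof.
move=> s; split; exists J; split; rewrite ?dimJ // => a.
  by split; [apply: J_jac | apply: jac_J].
rewrite /s s_eq; have := anh a; rewrite /= => ->.
by split; [apply: J_inS | case=> E ea; apply: inS_J].
Qed.

End Main.

Unset Implicit Arguments.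

Theorem proposition3p6
  (F : finFieldType) (gT : finGroupType) (k : nat) (t : int) (x y : gT) :
  3%N \in [pchar F] ->
  let m := (3 * k + 1)%N in
  (t ^+ 3 = 1 %[mod m%:Z])%Z ->
  gcdz m%:Z (t - 1) = 1%N ->
  (* gT is the group T_{3m} = < x, y | x^m = y^3 = 1, y^-1 x y = x^t > *)
  <<[set x; y]>>%g = [set: gT] ->
  (x ^+ m)%g = 1%g -> (y ^+ 3)%g = 1%g ->
  (x ^ y)%g = (x ^+ `|(t %% m%:Z)%Z|%N)%g ->
  #|gT| = (3 * m)%N ->
  let s : galg F gT := \sum_(g : gT | (3.-elt g)%g) gelt F g in
  (exists J : {vspace galg F gT},
      (forall a, a \in J <-> in_jacobson a) /\ \dim J = 2%N) /\
  (exists A : {vspace galg F gT},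
      (forall a, a \in A <-> gmul a s = 0 /\ gmul s a = 0) /\ \dim A = 2%N).
Proof.
move=> pF m _ tgcd gen xm y3 xy cardG.
exact: (@main_result F gT k t x y pF tgcd gen xm y3 xy cardG).
Qed.
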